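(* Let $p\in\mathbb{R}$ and let $\gamma$ be a $p$-elastic curve in $\mathbb{S}^2$ whose curvature is a non-constant periodic function of arc length. Then either $p=2$ or $p\in(0,1)$.
   Context: $\mathbb{S}^2$ is the unit sphere in $\mathbb{R}^3$ with the induced metric. For an immersed curve $\gamma$ in $\mathbb{S}^2$ parametrized by arc length $s$, let $T=\gamma'$, let $N$ be the rotation of $T$ by $+\pi/2$ in the tangent plane of $\mathbb{S}^2$, and define the geodesic curvature $\kappa$ by $\nabla_T T=\kappa N$. Curves are smooth (class $\mathcal{C}^4$ suffices). Here $\mathbb{N}$ includes $0$. The $p$-elastic functional is $\mathbf{\Theta}_p(\gamma)=\int_\gamma \kappa^p\,ds$; if $p\in\mathbb{R}\setminus\mathbb{N}$ it is considered only on convex curves ($\kappa>0$ everywhere). A $p$-elastic curve is a curve (convex if $p\notin\mathbb{N}$) whose curvature satisfies $$p\,\frac{d^2}{ds^2}\left(\kappa^{p-1}\right)+(p-1)\kappa^{p+1}+p\,\kappa^{p-1}=0.$$ *)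

(* Defs.v *)
From Stdlib Require Import Reals.
From Coquelicot Require Import Coquelicot.
Open Scope R_scope.

(** Real power x^a: integer power when a is an integer (so that, e.g.,
    kappa^(p-1) makes sense for sign-changing kappa when p is a natural
    number), and Rpower x a (= exp (a ln x), meaningful for x > 0) otherwise.
    For x > 0 both branches agree with the usual x^a. *)
Definition cpow (x a : R) : R :=
  if Req_EM_T (IZR (Int_part a)) a then powerRZ x (Int_part a) else Rpower x a.

Definition is_natp (p : R) : Prop := exists n : nat, p = INR n.

Record curve3 := Curve3 { cx : R -> R ; cy : R -> R ; cz : R -> R }.

Definition C4 (f : R -> R) : Prop :=
  (forall (k : nat) (s : R), (k <= 4)%nat -> ex_derive_n f k s) /\
  (forall s, continuous (Derive_n f 4) s).

Definition arclength_S2_curve (g : curve3) : Prop :=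
  C4 (cx g) /\ C4 (cy g) /\ C4 (cz g) /\
  (forall s, (cx g s)^2 + (cy g s)^2 + (cz g s)^2 = 1) /\
  (forall s, (Derive (cx g) s)^2 + (Derive (cy g) s)^2 + (Derive (cz g) s)^2 = 1).

Definition T1 (g : curve3) s := Derive (cx g) s.
Definition T2 (g : curve3) s := Derive (cy g) s.
Definition T3 (g : curve3) s := Derive (cz g) s.

(** N = rotation of T by +pi/2 in the tangent plane T_gamma S^2, oriented by
    the outward normal gamma:  N = gamma x T. *)
Definition N1 (g : curve3) s := cy g s * T3 g s - cz g s * T2 g s.
Definition N2 (g : curve3) s := cz g s * T1 g s - cx g s * T3 g s.
Definition N3 (g : curve3) s := cx g s * T2 g s - cy g s * T1 g s.

(** Geodesic curvature: nabla_T T = kappa N, where nabla_T T is the tangential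
    projection of gamma''; since N is tangent to S^2 and unit,
    kappa = < nabla_T T , N > = < gamma'' , N >. *)
Definition geod_curv (g : curve3) (s : R) : R :=
  Derive_n (cx g) 2 s * N1 g s + Derive_n (cy g) 2 s * N2 g s
  + Derive_n (cz g) 2 s * N3 g s.

Definition p_elastic (p : R) (g : curve3) : Prop :=
  let k := geod_curv g in
  let F := fun s => cpow (k s) (p - 1) in
  (~ is_natp p -> forall s, 0 < k s) /\
  (forall s, ex_derive F s) /\
  (forall s, ex_derive_n F 2 s) /\
  (forall s, p * Derive_n F 2 s + (p - 1) * cpow (k s) (p + 1) + p * F s = 0).

Definition nonconst_periodic (f : R -> R) : Prop :=
  (exists L, 0 < L /\ forall s, f (s + L) = f s) /\
  (exists s1 s2, f s1 <> f s2).

(* Main.v *)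
Require Import Defs.
From Stdlib Require Import Reals Lra Lia Psatz.
From Coquelicot Require Import Coquelicot.
Open Scope R_scope.

Lemma kdiff g : arclength_S2_curve g -> forall s, ex_derive (geod_curv g) s.
Proof.
intros [[hx _] [[hy _] [[hz _] _]]] s.
unfold geod_curv, N1,N2,N3,T1,T2,T3.
auto_derive.
repeat split;
 first [ exact (hx 3%nat s ltac:(lia)) | exact (hx 2%nat s ltac:(lia)) | exact (hx 1%nat s ltac:(lia))
       | exact (hy 3%nat s ltac:(lia)) | exact (hy 2%nat s ltac:(lia)) | exact (hy 1%nat s ltac:(lia))
       | exact (hz 3%nat s ltac:(lia)) | exact (hz 2%nat s ltac:(lia)) | exact (hz 1%nat s ltac:(lia)) ].
Qed.

Lemma cpow_pos x a : 0 < x -> cpow x a = Rpower x a.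
Proof.
intros hx; unfold cpow; destruct Req_EM_T as [e|e]; [rewrite powerRZ_Rpower, e by exact hx|]; reflexivity.
Qed.

Lemma cpow_nat x k : cpow x (INR k) = x ^ k.
Proof.
unfold cpow.
assert (Hi : Int_part (INR k) = Z.of_nat k).
{ symmetry; apply Int_part_spec; rewrite <- INR_IZR_INZ; lra. }
rewrite Hi, <- INR_IZR_INZ. destruct Req_EM_T as [_|e]; [|lra].
now rewrite pow_powerRZ.
Qed.

Lemma Rpower_gt0 x a : 0 < Rpower x a.
Proof. unfold Rpower; apply exp_pos. Qed.

Lemma cont_of_der (f : R -> R) x : ex_derive f x -> continuity_pt f x.
Proof. intros h. apply continuity_pt_filterlim. exact (@ex_derive_continuous R_AbsRing R_NormedModule f x h). Qed.

Theorem mainTheorem4 (p : R) (g : curve3) :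
  arclength_S2_curve g ->
  p_elastic p g ->
  nonconst_periodic (geod_curv g) ->
  p = 2 \/ (0 < p /\ p < 1).
Proof.
intros Hc Hel [[L [HL Hper]] [s1 [s2 Hne]]].
destruct Hel as [Hconv [Hd1 [Hd2 Heq]]]; cbv zeta in *.
set (k := geod_curv g) in *.
set (F := fun s => cpow (k s) (p - 1)) in *.
assert (Hd2' : forall s, ex_derive (Derive F) s) by exact Hd2.
assert (Heq' : forall s, p * Derive (Derive F) s + (p - 1) * cpow (k s) (p + 1) + p * F s = 0) by exact Heq.
clear Hd2 Heq.
assert (HFp : forall s, Derive F (s + L) = Derive F s).
{ intros s.
  assert (E1 : Derive (fun x => F (x + L)) s = Derive F s).
  { apply Derive_ext; intros t; unfold F; now rewrite Hper. }
  rewrite <- E1. rewrite (Derive_comp F (fun x => x + L) s (Hd1 _)).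
  2:{ auto_derive; auto. }
  replace (Derive (fun x => x + L) s) with 1 by (symmetry; apply is_derive_unique; auto_derive; auto; ring).
  ring. }
(* Rolle on F' *)
destruct (MVT_gen (Derive F) 0 L (Derive (Derive F))) as [c [_ Hc0]].
{ intros x _; apply Derive_correct, Hd2'. }
{ intros x _; apply cont_of_der, Hd2'. }
assert (HF2c : Derive (Derive F) c = 0).
{ assert (HL0 : Derive F L = Derive F 0) by (rewrite <- (HFp 0); f_equal; ring).
  rewrite HL0 in Hc0. assert (Hz : Derive (Derive F) c * (L - 0) = 0) by lra.
  apply Rmult_integral in Hz; destruct Hz; [assumption| lra]. }
specialize (Heq' c) as Hc1. rewrite HF2c in Hc1.
destruct (Classical_Prop.classic (is_natp p)) as [[n Hn]|Hnn].
2:{ right. specialize (Hconv Hnn c) as Hk.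
  unfold F in Hc1. rewrite !cpow_pos in Hc1 by exact Hk.
  replace (p + 1) with ((p - 1) + INR 2) in Hc1 by (simpl; ring).
  rewrite Rpower_plus, Rpower_pow in Hc1 by exact Hk.
  assert (Hr := Rpower_gt0 (k c) (p - 1)).
  assert (Hq : (p - 1) * k c ^ 2 + p = 0).
  { apply (Rmult_eq_reg_l (Rpower (k c) (p - 1))); [|lra]. nra. }
  assert (0 < k c ^ 2) by (apply pow_lt; lra).
  split; nra. }
subst p.
destruct n as [|[|[|m]]].
- exfalso. apply Hne.
  assert (Hz : forall s, k s = 0).
  { intros s; specialize (Heq' s). replace (INR 0 + 1) with (INR 1) in Heq' by (simpl; ring).
    rewrite cpow_nat in Heq'. simpl in Heq'. lra. }
  now rewrite !Hz.
- exfalso. unfold F in Hc1. replace (INR 1 - 1) with (INR 0) in Hc1 by (simpl; ring).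
  rewrite cpow_nat in Hc1. simpl in Hc1. lra.
- left; simpl; ring.
- exfalso.
  set (n := S (S (S m))) in *.
  assert (Hpm : INR n - 1 = INR (m + 2)) by (unfold n; rewrite !S_INR, plus_INR; simpl; ring).
  assert (Hpp : INR n + 1 = INR (m + 4)) by (unfold n; rewrite !S_INR, plus_INR; simpl; ring).
  assert (HFe : forall s, F s = k s ^ (m + 2)) by (intros s; unfold F; rewrite Hpm; apply cpow_nat).
  assert (Heqn : forall s, INR n * Derive (Derive F) s + (INR n - 1) * k s ^ (m + 4) + INR n * k s ^ (m + 2) = 0).
  { intros s; rewrite <- HFe, <- (cpow_nat _ (m+4)), <- Hpp; apply Heq'. }
  assert (hk : forall s, ex_derive k s) by (apply kdiff, Hc).
  assert (HF' : forall s, Derive F s = INR (m + 2) * Derive k s * k s ^ (m + 1)).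
  { intros s. rewrite (Derive_ext F (fun t => k t ^ (m + 2)) s HFe).
    apply is_derive_unique. replace (m + 1)%nat with (Init.Nat.pred (m + 2)) by lia.
    apply is_derive_pow, Derive_correct, hk. }
  assert (Hn0 : 0 < INR n) by (apply lt_0_INR; unfold n; lia).
  assert (Hkc : k c = 0).
  { specialize (Heqn c). rewrite HF2c in Heqn.
    replace (m + 4)%nat with ((m + 2) + 2)%nat in Heqn by lia. rewrite pow_add in Heqn.
    assert (Hm2 : 0 <= INR (m + 2)) by apply pos_INR.
    assert (Hz : k c ^ (m + 2) * ((INR n - 1) * k c ^ 2 + INR n) = 0) by lra.
    apply Rmult_integral in Hz. destruct Hz as [Hz|Hz].
    - destruct (Req_dec (k c) 0) as [e|e]; [exact e|]. exfalso; exact (pow_nonzero _ _ e Hz).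
    - exfalso. assert (1 <= INR n) by (apply (le_INR 1); unfold n; lia).
      assert (0 <= k c ^ 2) by (rewrite <- Rsqr_pow2; apply Rle_0_sqr). nra. }
  assert (Hq : INR n = INR m + 3) by (unfold n; rewrite !S_INR; ring).
  assert (Ha : INR (m + 2) = INR m + 2) by (rewrite plus_INR; simpl; ring).
  clearbody n.
  set (E := fun s => INR n / 2 * (Derive F s) ^ 2 + (INR n - 1) ^ 2 / (2 * INR n) * k s ^ (2 * m + 6)
                     + INR n / 2 * (k s ^ (m + 2)) ^ 2).
  assert (HE : forall s, is_derive E s 0).
  { intros s.
    assert (H1 := is_derive_pow (Derive F) 2 s _ (Derive_correct _ _ (Hd2' s))).
    assert (H2 := is_derive_pow k (2 * m + 6) s _ (Derive_correct _ _ (hk s))).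
    assert (H3 := is_derive_pow (fun x => k x ^ (m + 2)) 2 s _ (is_derive_pow k (m + 2) s _ (Derive_correct _ _ (hk s)))).
    assert (HD := is_derive_plus _ _ s _ _ (is_derive_plus _ _ s _ _ (is_derive_scal _ s (INR n / 2) _ H1)
                     (is_derive_scal _ s ((INR n - 1) ^ 2 / (2 * INR n)) _ H2)) (is_derive_scal _ s (INR n / 2) _ H3)).
    match type of HD with is_derive _ _ ?D => replace 0 with D; [exact HD|] end.
    unfold plus; simpl.
    match goal with |- ?a = _ => change ((a : R) = (0:R)) end.
    rewrite HF'.
    assert (Hf2 : Derive (Derive F) s = - ((INR n - 1) * k s ^ (m + 4) + INR n * k s ^ (m + 2)) / INR n).
    { specialize (Heqn s). field_simplify_eq; lra. }
    rewrite Hf2.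
    replace (Init.Nat.pred (m + (m + 0) + 6)) with ((m + 1) + (m + 1) + 3)%nat by lia.
    replace (Init.Nat.pred (m + 2)) with (m + 1)%nat by lia.
    replace (m + 4)%nat with ((m + 1) + 3)%nat by lia.
    replace (m + 2)%nat with ((m + 1) + 1)%nat by lia.
    rewrite !pow_add.
    replace (INR (m + (m + 0) + 6)) with (2 * INR n) by (rewrite !plus_INR, Hq; simpl; ring).
    replace (INR (m + 1 + 1)) with (INR n - 1) by (rewrite !plus_INR, Hq; simpl; ring).
    field. lra. }
  assert (HEc : E c = 0).
  { unfold E. rewrite HF', Hkc.
    replace (m + 1)%nat with (S m) by lia. replace (2 * m + 6)%nat with (S (2 * m + 5)) by lia.
    replace (m + 2)%nat with (S (m + 1)) by lia. simpl. ring. }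
  assert (HE0 : forall s, E s = 0).
  { intros s. destruct (MVT_gen E c s (fun _ => 0)) as [d [_ Hd]].
    { intros x _; apply HE. }
    { intros x _; apply cont_of_der. eexists; apply HE. }
    lra. }
  assert (Hz : forall s, k s = 0).
  { intros s. specialize (HE0 s). unfold E in HE0.
    assert (A1 : 0 <= (Derive F s) ^ 2) by (rewrite <- Rsqr_pow2; apply Rle_0_sqr).
    assert (A2 : 0 <= k s ^ (2 * m + 6)).
    { replace (2 * m + 6)%nat with ((m + 3) * 2)%nat by lia. rewrite pow_mult.
      rewrite <- Rsqr_pow2; apply Rle_0_sqr. }
    assert (A3 : 0 <= (k s ^ (m + 2)) ^ 2) by (rewrite <- Rsqr_pow2; apply Rle_0_sqr).
    assert (A4 : 0 <= (INR n - 1) ^ 2 / (2 * INR n)).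
    { apply Rdiv_le_0_compat; [rewrite <- Rsqr_pow2; apply Rle_0_sqr | lra]. }
    assert (A5 : (k s ^ (m + 2)) ^ 2 = 0).
    { assert (0 <= (INR n - 1) ^ 2 / (2 * INR n) * k s ^ (2 * m + 6)) by (apply Rmult_le_pos; auto).
      assert (0 <= INR n / 2 * (Derive F s) ^ 2) by (apply Rmult_le_pos; lra).
      assert (0 <= INR n / 2 * (k s ^ (m + 2)) ^ 2) by (apply Rmult_le_pos; lra).
      nra. }
    destruct (Req_dec (k s) 0) as [e|e]; [exact e|].
    exfalso. exact (pow_nonzero _ _ (pow_nonzero _ _ e) A5). }
  apply Hne; now rewrite !Hz.
Qed.
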